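(* Let $\boldsymbol{\mathcal{G}}=(\mathcal{V},\boldsymbol{\mathcal{E}},\mu(\cdot))$ be a stochastic digraph with vertex set $\mathbb{Z}_n$, edge sets $\mathcal{E}_1,\dots,\mathcal{E}_h$, and out-neighborhood map $H(x,w)=\{y:(x,y)\in\mathcal{E}_w\}$, such that there is no pair $(i,w)\in\mathbb{Z}_n\times\mathbb{Z}_h$ with $\mu(\{w\})>0$ and $H(i,w)=\emptyset$. Let $\mathcal{Q}\subset\mathbb{Z}_n$ and let $\check{\boldsymbol{\mathcal{G}}}$ be the augmented stochastic digraph on $\mathbb{Z}_{n+2}$ (with the same $\mu$) obtained by replacing, in each $\mathcal{E}_s$, every edge $(i,j)$ with $j\in\mathcal{Q}$ by the edge $(i,n+1)$, and adding the edges $(n+1,n+2)$ and $(n+2,n+2)$ to each $\mathcal{E}_s$. Let $\check H$ be its out-neighborhood map and consider the Markov decision process on states $\mathbb{Z}_{n+2}$ with action space $\mathcal{A}(i)$ at state $i$ equal to the set of tuples $a=(\xi_{1,a},\dots,\xi_{h,a})$ with $\xi_{w,a}\in\check H(i,w)$ for each $w$, transition probabilities $$\check p(j\mid i,a)=\sum_{w\in\{s\in\mathbb{Z}_h:\,\xi_{s,a}=j\}}\mu(\{w\}),$$ and reward $r(i,a,j)=\mathbb{I}_{\{n+1\}}(j)$. Let $v_\star$ be the optimal state-value function of this MDP, i.e., $v_\star(0,x)=0$ and $v_\star(k,x)=\max_{a\in\mathcal{A}(x)}\sum_{j}\check p(j\mid x,a)\big(r(x,a,j)+v_\star(k-1,j)\big)$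 for $k\geqslant1$. Then for all $k\in\mathbb{Z}_{\geqslant0}$ and all $x\in\mathbb{Z}_n$, $$\mathfrak{R}_{\mathcal{Q}}(k,x)=v_\star(k,x),$$ where $\mathfrak{R}_{\mathcal{Q}}(k,x):=\sup_{\boldsymbol{x}\in\mathcal{S}(x)}\mathbb{P}\big(\exists\,t\in\{1,\dots,k\}:\boldsymbol{x}_t\in\mathcal{Q}\big)$ is the weak reachability probability.
   Context: A stochastic digraph is a triple $(\mathbb{Z}_n,\{\mathcal{E}_s\}_{s=1}^h,\mu)$ with $\mathcal{E}_s\subset\mathbb{Z}_n\times\mathbb{Z}_n$ and $\mu$ the common distribution of an i.i.d. sequence $\boldsymbol{w}_k:\Omega\to\mathbb{Z}_h$, $k\in\mathbb{Z}_{\geqslant0}$, on a probability space $(\Omega,\mathcal{F},\mathbb{P})$. A stochastic directed path from $x$ is a map $\omega\mapsto\{\boldsymbol{x}_k(\omega)\}_{k=0}^{\boldsymbol{K}(\omega)}$ with $\boldsymbol{x}_0=x$, $\boldsymbol{x}_{k+1}(\omega)\in H(\boldsymbol{x}_k(\omega),\boldsymbol{w}_k(\omega))$ for all $\omega$ and $k<\boldsymbol{K}(\omega)$, and with $\boldsymbol{x}_{k+1}$ measurable with respect to $\sigma(\boldsymbol{w}_0,\dots,\boldsymbol{w}_k)$ for each $k$. It is maximal if it cannot be extended; $\mathcal{S}(x)$ is the set of maximal stochastic directed paths from $x$. $\mathbb{I}_{A}$ denotes the indicator function of the set $A$. *)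

(* Defs.v *)
From HB Require Import structures.
From mathcomp Require Import all_boot all_order all_algebra.
From mathcomp Require Import all_classical all_reals all_analysis.

Set Implicit Arguments.
Unset Strict Implicit.
Unset Printing Implicit Defensive.

Import Order.TTheory GRing.Theory Num.Theory.
Local Open Scope classical_set_scope.
Local Open Scope ring_scope.

(* Vertices Z_n are represented by 'I_n (0-indexed); the noise alphabet Z_h
   by 'I_h.  A stochastic digraph's edge sets: E : 'I_h -> {set 'I_n * 'I_n}. *)

Definition Hout (n h : nat) (E : 'I_h -> {set 'I_n * 'I_n}) (x : 'I_n) (w : 'I_h)
  : {set 'I_n} := [set y | (x, y) \in E w].

(* original vertex i is embedded as i; the paper's vertex "n+1" is the
   ordinal n and the paper's vertex "n+2" is the ordinal n+1. *)
Definition emb (n : nat) (i : 'I_n) : 'I_(n + 2) := lshift 2 i.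
Definition vQ (n : nat) : 'I_(n + 2) := rshift n (@Ordinal 2 0 isT).
Definition vS (n : nat) : 'I_(n + 2) := rshift n (@Ordinal 2 1 isT).

Definition Echeck (n h : nat) (E : 'I_h -> {set 'I_n * 'I_n}) (Q : {set 'I_n})
  (s : 'I_h) : {set 'I_(n + 2) * 'I_(n + 2)} :=
  [set (emb e.1, if e.2 \in Q then vQ n else emb e.2) | e in E s]
  :|: [set (vQ n, vS n); (vS n, vS n)].

Definition Hcheck (n h : nat) (E : 'I_h -> {set 'I_n * 'I_n}) (Q : {set 'I_n})
  (i : 'I_(n + 2)) (w : 'I_h) : {set 'I_(n + 2)} :=
  [set j | (i, j) \in Echeck E Q w].

Definition admissible (n h : nat) (E : 'I_h -> {set 'I_n * 'I_n}) (Q : {set 'I_n})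
  (i : 'I_(n + 2)) (a : {ffun 'I_h -> 'I_(n + 2)}) : bool :=
  [forall w, (Hcheck E Q i w != finset.set0) ==> (a w \in Hcheck E Q i w)].

Definition ptrans (R : realType) (n h : nat) (mu : 'I_h -> R)
  (i : 'I_(n + 2)) (a : {ffun 'I_h -> 'I_(n + 2)}) (j : 'I_(n + 2)) : R :=
  \sum_(w < h | a w == j) mu w.

Definition reward (R : realType) (n : nat) (j : 'I_(n + 2)) : R :=
  if j == vQ n then 1 else 0.

(* optimal state-value function (finite horizon k); the max is over the
   (finite, nonempty) admissible action set; all values are >= 0 when mu is a
   probability mass function, so the neutral element 0 is harmless. *)
Fixpoint vstar (R : realType) (n h : nat) (E : 'I_h -> {set 'I_n * 'I_n})
  (Q : {set 'I_n}) (mu : 'I_h -> R) (k : nat) (x : 'I_(n + 2)) : R :=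
  match k with
  | 0 => 0
  | k'.+1 =>
      \big[Num.max/0]_(a : {ffun 'I_h -> 'I_(n + 2)} | admissible E Q x a)
        \sum_(j < n + 2)
           ptrans mu x a j * (reward R j + vstar E Q mu k' j)
  end.

Section Stoch.
Context (R : realType) (d : measure_display) (Omega : measurableType d).
Context (P : probability Omega R).
Context (n h : nat) (E : 'I_h -> {set 'I_n * 'I_n}).
Context (w : nat -> Omega -> 'I_h).

Definition iid_law (mu : 'I_h -> R) : Prop :=
  (forall (i : nat) (B : set 'I_h), measurable (w i @^-1` B)) /\
  (forall (S : seq nat) (B : nat -> {set 'I_h}), uniq S ->
     P (\bigcap_(i in [set i | i \in S]) (w i @^-1` [set b | b \in B i]))
     = (\prod_(i <- S) \sum_(b in B i) mu b)%:E).

Definition sigma_w (t : nat) : set (set Omega) :=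
  <<s [set A | exists (i : nat) (B : set 'I_h), (i <= t)%N /\ A = w i @^-1` B] >>.

(* A stochastic directed path from x0, {x_k(omega)}_{k=0}^{K(omega)}, is
   encoded as x : nat -> Omega -> option 'I_n with x t omega = Some (x_t omega)
   for t <= K(omega) and None for t > K(omega) (K(omega) may be infinite). *)
Definition stoch_path (x0 : 'I_n) (x : nat -> Omega -> option 'I_n) : Prop :=
  (forall om, x 0%N om = Some x0) /\
  (forall (t : nat) om (y : 'I_n), x t.+1 om = Some y ->
      exists z, x t om = Some z /\ y \in Hout E z (w t om)) /\
  (forall (t : nat) (o : option 'I_n), sigma_w t (x t.+1 @^-1` [set o])).

Definition maximal_path (x0 : 'I_n) (x : nat -> Omega -> option 'I_n) : Prop :=
  stoch_path x0 x /\
  (forall om (t : nat) (y : 'I_n), x t om = Some y -> x t.+1 om = None ->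
      Hout E y (w t om) = finset.set0).

Definition reach_event (Q : {set 'I_n}) (k : nat) (x : nat -> Omega -> option 'I_n)
  : set Omega :=
  [set om | exists t : nat, [/\ (1 <= t)%N, (t <= k)%N &
                exists y, x t om = Some y /\ y \in Q]].

Definition weak_reach (Q : {set 'I_n}) (k : nat) (x0 : 'I_n) : \bar R :=
  ereal_sup [set P (reach_event Q k x) | x in [set x | maximal_path x0 x]].

End Stoch.

(* Main.v *)
Require Import Defs.
From HB Require Import structures.
From mathcomp Require Import all_boot all_order all_algebra.
From mathcomp Require Import all_classical all_reals all_analysis.
From mathcomp Require Import zify.
Import Order.TTheory GRing.Theory Num.Theory.
Local Open Scope classical_set_scope.
Local Open Scope ring_scope.
Set Implicit Arguments.
Unset Strict Implicit.
Unset Printing Implicit Defensive.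

Definition seg (T : Type) (h : nat) (ww : nat -> T -> 'I_h) (om : T) (m k : nat)
  : seq 'I_h := [seq ww i om | i <- iota m k].

Lemma segS (T : Type) h (ww : nat -> T -> 'I_h) om m k :
  seg ww om m k.+1 = rcons (seg ww om m k) (ww (m + k)%N om).
Proof. by rewrite /seg -addn1 iotaD map_cat cats1. Qed.

Lemma segS_l (T : Type) h (ww : nat -> T -> 'I_h) om m k :
  seg ww om m k.+1 = ww m om :: seg ww om m.+1 k.
Proof. by []. Qed.

Lemma window_meas (d' : measure_display) (T : measurableType d') h
  (ww : nat -> T -> 'I_h) (N : nat) :
  (forall i c, (i < N)%N -> measurable (ww i @^-1` [set c])) ->
  forall g : seq 'I_h -> Prop, measurable [set om | g (seg ww om 0 N)].
Proof.
elim: N => [|N IH] Hm g.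
  have [g0|g0] := pselect (g [::]).
    by rewrite (_ : [set om | _] = setT) //; apply/seteqP; split.
  by rewrite (_ : [set om | _] = set0) //; apply/seteqP; split.
have -> : [set om | g (seg ww om 0 N.+1)] =
  \bigcup_(c : 'I_h) (ww N @^-1` [set c] `&` [set om | g (rcons (seg ww om 0 N) c)]).
  apply/seteqP; split => om /=.
    by rewrite segS => Hg; exists (ww N om) => //.
  by case=> c _ [/= <-]; rewrite segS.
apply: countable_bigcupT_measurable; first exact: countableP.
move=> c; apply: measurableI; first exact: Hm.
exact: (IH (fun i c' Hi => Hm i c' (ltnW Hi)) (fun u => g (rcons u c))).
Qed.

Lemma seg_nth (T : Type) h (ww : nat -> T -> 'I_h) om m k i (c0 : 'I_h) :
  (i < k)%N -> nth c0 (seg ww om m k) i = ww (m + i)%N om.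
Proof. by move=> Hi; rewrite /seg (nth_map 0%N) ?size_iota // nth_iota. Qed.

Lemma size_seg (T : Type) h (ww : nat -> T -> 'I_h) om m k :
  size (seg ww om m k) = k.
Proof. by rewrite /seg size_map size_iota. Qed.

Section BigMax.
Variables (R : realType) (I : finType).

Lemma bigmax_ge0 (Pr : pred I) (F : I -> R) : 0 <= \big[Num.max/0]_(i | Pr i) F i.
Proof.
rewrite unlock; elim: (index_enum I) => [|i s IH] //=.
by case: ifP => _ //; rewrite le_max IH orbT.
Qed.

Lemma le_bigmax_in (Pr : pred I) (F : I -> R) i : Pr i -> F i <= \big[Num.max/0]_(j | Pr j) F j.
Proof. by move=> Hi; rewrite (bigD1 i) //= le_max lexx. Qed.

Lemma bigmax_le_b (Pr : pred I) (F : I -> R) b : 0 <= b -> (forall i, Pr i -> F i <= b) ->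
  \big[Num.max/0]_(i | Pr i) F i <= b.
Proof. by move=> H0 H; elim/big_ind: _ => // x y Hx Hy; rewrite ge_max Hx. Qed.

Lemma bigmax_att (Pr : pred I) (F : I -> R) i0 : Pr i0 -> (forall i, Pr i -> 0 <= F i) ->
  exists2 i, Pr i & F i = \big[Num.max/0]_(j | Pr j) F j.
Proof.
move=> Hi0 Hge.
have : \big[Num.max/0]_(j | Pr j) F j = 0 \/ exists2 i, Pr i & F i = \big[Num.max/0]_(j | Pr j) F j.
  elim/big_ind: _ => [|x y Hx Hy|i Hi]; [by left| |by right; exists i].
  rewrite maxEle; case: ifP => _; [exact: Hy|exact: Hx].
case=> // H0; exists i0 => //; apply/eqP; rewrite eq_le (le_bigmax_in _ Hi0) /= H0.
exact: Hge.
Qed.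
End BigMax.

Section Alg.
Variables (R : realType) (n h : nat) (E : 'I_h -> {set 'I_n * 'I_n})
  (mu : 'I_h -> R) (Q : {set 'I_n}).
Hypothesis mu_ge0 : forall c, 0 <= mu c.
Hypothesis Hnodead : forall (i : 'I_n) (s : 'I_h), 0 < mu s -> Hout E i s != finset.set0.

Fixpoint U (m : nat) (y : 'I_n) : R :=
  match m with
  | 0 => 0
  | m'.+1 => \sum_(c < h) mu c *
      \big[Num.max/0]_(z in Hout E y c) (if z \in Q then 1 else U m' z)
  end.

Definition G m z := if z \in Q then 1 else U m z.
Definition M m y c := \big[Num.max/0]_(z in Hout E y c) G m z.

Lemma U_S m y : U m.+1 y = \sum_(c < h) mu c * M m y c.
Proof. by []. Qed.

Lemma U_ge0 m y : 0 <= U m y.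
Proof.
case: m => [|m] //=; apply: sumr_ge0 => c _; apply: mulr_ge0 => //; exact: bigmax_ge0.
Qed.

Lemma G_ge0 m z : 0 <= G m z.
Proof. by rewrite /G; case: ifP => _ //; exact: U_ge0. Qed.

Lemma mu0 y c : Hout E y c = finset.set0 -> mu c = 0.
Proof.
move=> H; apply/eqP; rewrite eq_le mu_ge0 andbT leNgt; apply/negP => /(Hnodead y).
by rewrite H eqxx.
Qed.

Definition embq (z : 'I_n) : 'I_(n + 2) := if z \in Q then vQ n else emb z.

Lemma emb_neq_vQ y : (emb y == vQ n) = false.
Proof. apply/negbTE; apply/eqP => /(congr1 val) /=; rewrite addn0 => H; have := ltn_ord y; by rewrite H ltnn. Qed.
Lemma emb_neq_vS y : (emb y == vS n) = false.
Proof. apply/negbTE; apply/eqP => /(congr1 val) /= H; have := ltn_ord y; rewrite H; lia. Qed.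
Lemma vS_neq_vQ : (vS n == vQ n) = false.
Proof. by apply/negbTE; apply/eqP => /(congr1 val) /=; lia. Qed.
Lemma emb_inj : injective (@emb n).
Proof. by move=> a b /(congr1 val) /= /val_inj. Qed.

Lemma Hcheck_emb y c j : j \in Hcheck E Q (emb y) c <-> exists2 z, z \in Hout E y c & j = embq z.
Proof.
rewrite /Hcheck /Echeck inE finset.in_setU !inE; split.
  case/orP => [/imsetP [[a b] Hab [Ha Hb]]|].
    by exists b; rewrite // /Hout inE (val_inj Ha).
  by rewrite !xpair_eqE emb_neq_vQ emb_neq_vS.
case=> z; rewrite inE => Hz ->; apply/orP; left; apply/imsetP; exists (y, z) => //.
Qed.

Lemma Hcheck_vQ c j : j \in Hcheck E Q (vQ n) c <-> j = vS n.
Proof.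
rewrite /Hcheck /Echeck inE finset.in_setU !inE !xpair_eqE eqxx /=; split; last first.
  by move=> ->; rewrite eqxx !orbT.
case/or3P => [/imsetP [[a b] Hab [Ha Hb]]|/eqP //|/andP [_ /eqP //]].
by have := ltn_ord a; move: Ha => /= <-; lia.
Qed.

Lemma Hcheck_vS c j : j \in Hcheck E Q (vS n) c <-> j = vS n.
Proof.
rewrite /Hcheck /Echeck inE finset.in_setU !inE !xpair_eqE eqxx /=; split; last first.
  by move=> ->; rewrite eqxx !orbT.
case/or3P => [/imsetP [[a b] Hab [Ha Hb]]|/andP [_ /eqP //]|/eqP //].
by have := ltn_ord a; move: Ha => /= <-; lia.
Qed.

Lemma ptrans_sum x (a : {ffun 'I_h -> 'I_(n + 2)}) (F : 'I_(n + 2) -> R) :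
  \sum_(j < n + 2) ptrans mu x a j * F j = \sum_(c < h) mu c * F (a c).
Proof.
rewrite /ptrans.
under eq_bigr do rewrite big_distrl /= big_mkcond /=.
rewrite exchange_big /=; apply: eq_bigr => c _.
rewrite (bigD1 (a c)) //= eqxx big1 ?addr0 // => j /negbTE.
by rewrite eq_sym => ->.
Qed.


Lemma adm_at x a c j0 : admissible E Q x a -> j0 \in Hcheck E Q x c -> a c \in Hcheck E Q x c.
Proof. by move=> /forallP /(_ c) /implyP H Hj; apply: H; apply/set0Pn; exists j0. Qed.

Lemma reward_vS : reward R (vS n) = 0.
Proof. by rewrite /reward vS_neq_vQ. Qed.

Lemma vstar_vS m : vstar E Q mu m (vS n) = 0.
Proof.
elim: m => [|m IH] //=; elim/big_ind: _ => [//|x y -> ->|a Ha]; first exact: maxxx.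
rewrite ptrans_sum; apply: big1 => c _.
have /Hcheck_vS -> := adm_at Ha (proj2 (Hcheck_vS c (vS n)) erefl).
by rewrite reward_vS IH addr0 mulr0.
Qed.

Lemma vstar_vQ m : vstar E Q mu m (vQ n) = 0.
Proof.
case: m => [|m] //=; elim/big_ind: _ => [//|x y -> ->|a Ha]; first exact: maxxx.
rewrite ptrans_sum; apply: big1 => c _.
have /Hcheck_vQ -> := adm_at Ha (proj2 (Hcheck_vQ c (vS n)) erefl).
by rewrite reward_vS vstar_vS addr0 mulr0.
Qed.

Lemma phi_embq m z : (forall y, vstar E Q mu m (emb y) = U m y) ->
  reward R (embq z) + vstar E Q mu m (embq z) = G m z.
Proof.
move=> IH; rewrite /embq /G; case: ifP => _.
  by rewrite vstar_vQ addr0 /reward eqxx.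
by rewrite IH /reward emb_neq_vQ add0r.
Qed.

Lemma vstar_emb m y : vstar E Q mu m (emb y) = U m y.
Proof.
elim: m y => [|m IH] y //.
rewrite U_S /=; apply/eqP; rewrite eq_le; apply/andP; split.
  apply: bigmax_le_b; first by rewrite -U_S U_ge0.
  move=> a Ha; rewrite ptrans_sum; apply: ler_sum => c _.
  have [H0|/set0Pn [z0 Hz0]] := eqVneq (Hout E y c) finset.set0.
    by rewrite (mu0 H0) !mul0r.
  apply: ler_wpM2l => //.
  have /Hcheck_emb [z Hz ->] := adm_at Ha (proj2 (Hcheck_emb y c (embq z0)) (ex_intro2 _ _ z0 Hz0 erefl)).
  by rewrite phi_embq //; apply: le_bigmax_in.
pose a := [ffun c => if [pick z in Hout E y c | G m z == M m y c] is Some z then embq z else vS n].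
have Hpick : forall c, Hout E y c != finset.set0 -> exists2 z, z \in Hout E y c & a c = embq z /\ G m z = M m y c.
  move=> c /set0Pn [z0 Hz0]; rewrite /a ffunE.
  case: pickP => [z /andP [Hz /eqP HG]|H]; first by exists z.
  have [z Hz HG] := @bigmax_att _ _ (fun z => z \in Hout E y c) (fun z => G m z) z0 Hz0 (fun z _ => G_ge0 m z).
  by move: (H z); rewrite Hz /= /M -HG eqxx.
have Ha : admissible E Q (emb y) a.
  apply/forallP => c; apply/implyP => /set0Pn [j /Hcheck_emb [z0 Hz0 _]].
  have [|z Hz [-> _]] := Hpick c; first by apply/set0Pn; exists z0.
  by apply/Hcheck_emb; exists z.
apply: le_trans (le_bigmax_in _ Ha); rewrite ptrans_sum le_eqVlt; apply/orP; left; apply/eqP.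
apply: eq_bigr => c _.
have [H0|Hne] := eqVneq (Hout E y c) finset.set0; first by rewrite (mu0 H0) !mul0r.
have [z Hz [-> HG]] := Hpick c Hne.
by rewrite phi_embq // HG.
Qed.

End Alg.

Section Main.
Variables (R : realType) (d : measure_display) (Omega : measurableType d)
  (P : probability Omega R) (n h : nat) (E : 'I_h -> {set 'I_n * 'I_n})
  (mu : 'I_h -> R) (w : nat -> Omega -> 'I_h).

Lemma sigma_w_inv t A : sigma_w w t A ->
  forall om om', seg w om 0 t.+1 = seg w om' 0 t.+1 -> A om -> A om'.
Proof.
move=> HA.
pose C := [set B : set Omega | forall om om', seg w om 0 t.+1 = seg w om' 0 t.+1 -> B om -> B om'].
suff : C A by [].
apply: (smallest_sub _ _ HA).
  split.
  - by move=> om om' _.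
  - move=> B HB om om' Hs [_ HnB]; split => // HB'; apply: HnB; exact: (HB om' om).
  - move=> F HF om om' Hs [i _ Hi]; exists i => //; exact: (HF i om om').
move=> B [i [B' [Hi ->]]] om om' Hs /=.
have c0 := w 0%N om.
have := congr1 (fun s => nth c0 s i) Hs => /=.
by rewrite !seg_nth ?ltnS // => ->.
Qed.

Lemma window_sigma t (g : seq 'I_h -> Prop) :
  sigma_w w t [set om | g (seg w om 0 t.+1)].
Proof.
pose G := [set A | exists (i : nat) (B : set 'I_h), (i <= t)%N /\ A = w i @^-1` B].
have H1 : forall i c, (i < t.+1)%N -> (@measurable _ (g_sigma_algebraType G)) (w i @^-1` [set c]).
  move=> i c Hi; apply: sub_sigma_algebra; exists i, [set c]; split => //.
exact: (@window_meas _ (g_sigma_algebraType G) h w t.+1 H1 g).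
Qed.


Lemma bigsetU_memP (T : Type) (I : eqType) (s : seq I) (F : I -> set T) x :
  (\big[setU/set0]_(c <- s) F c) x <-> exists2 c, c \in s & F c x.
Proof.
elim: s => [|a s IH]; first by rewrite big_nil; split => // [[]].
rewrite big_cons; split.
  case=> [Ha|/IH [c Hc Hx]]; first by exists a => //; rewrite mem_head.
  by exists c => //; rewrite in_cons Hc orbT.
case=> c; rewrite in_cons => /orP [/eqP -> Hx|Hc Hx]; first by left.
by right; apply/IH; exists c.
Qed.

Lemma segD (T : Type) (ww : nat -> T -> 'I_h) om a b :
  seg ww om 0 (a + b) = seg ww om 0 a ++ seg ww om a b.
Proof. by rewrite /seg iotaD map_cat. Qed.

Definition pi (p : seq 'I_h) : R := \prod_(c <- p) mu c.

Fixpoint Sk (k : nat) (f : seq 'I_h -> bool) : R :=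
  match k with
  | 0 => (f [::])%:R
  | k'.+1 => \sum_(c < h) mu c * Sk k' (fun v => f (c :: v))
  end.

Variable Hiid : iid_law P w mu.

Lemma wmeas i B : measurable (w i @^-1` B).
Proof. by case: Hiid => H _; apply: H. Qed.

Lemma inhab : exists om : Omega, True.
Proof.
apply: contrapT => H.
have : [set: Omega] = set0 by apply/seteqP; split => // om _; apply: H; exists om.
move=> HT; have := probability_setT P; rewrite HT measure0 => -[] /esym/eqP; by rewrite oner_eq0.
Qed.

Lemma cyl_prob p :
  P [set om | seg w om 0 (size p) = p] = (pi p)%:E.
Proof.
have [om0 _] := inhab; pose c0 := w 0%N om0.
case: Hiid => _ H.
have := H (iota 0 (size p)) (fun i => [set nth c0 p i]%SET) (iota_uniq 0 (size p)).
have -> : \bigcap_(i in [set i | i \in iota 0 (size p)])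
      (w i @^-1` [set b | b \in [set nth c0 p i]%SET]) =
    [set om | seg w om 0 (size p) = p].
  apply/seteqP; split => om /=.
    move=> Hc; apply: (@eq_from_nth _ c0); first by rewrite size_seg.
    move=> i; rewrite size_seg => Hi.
    rewrite seg_nth // add0n.
    have := Hc i; rewrite /= mem_iota add0n Hi => /(_ isT).
    by rewrite inE => /eqP.
  move=> Hs i; rewrite /= mem_iota add0n => Hi.
  by rewrite inE -Hs seg_nth // add0n.
move=> ->; congr (_%:E).
under eq_bigr do rewrite big_set1.
by rewrite /pi -{3}(mkseq_nth c0 p) /mkseq big_map.
Qed.

Lemma probA k : forall p (f : seq 'I_h -> bool),
  P [set om | seg w om 0 (size p) = p /\ f (seg w om (size p) k)] = (pi p * Sk k f)%:E.
Proof.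
elim: k => [|k IH] p f.
  rewrite /=; case: (f [::]) => /=.
    rewrite mulr1 -cyl_prob; congr (P _); apply/seteqP; split => om /=; first by case.
    by move=> ->.
  rewrite mulr0 (_ : [set om | _] = set0) ?measure0 //.
  by apply/seteqP; split => om //= [].
pose F := fun c : 'I_h => [set om | seg w om 0 (size (rcons p c)) = rcons p c /\
     (fun v => f (c :: v)) (seg w om (size (rcons p c)) k)].
have -> : [set om | seg w om 0 (size p) = p /\ f (seg w om (size p) k.+1)] =
    \big[setU/set0]_(c < h) F c.
  apply/seteqP; split => om /=.
    move=> [Hs Hf]; apply/bigsetU_memP; exists (w (size p) om); first by rewrite mem_index_enum.
    by rewrite /F /= size_rcons segS add0n Hs.
  move/bigsetU_memP => [c _]; rewrite /F /= size_rcons segS add0n.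
  by move=> [/rcons_inj [-> Hc] Hf]; split => //; rewrite segS_l Hc.
have HF : forall c, measurable (F c).
  move=> c.
  have -> : F c = [set om | (fun u => take (size (rcons p c)) u = rcons p c /\
        f (c :: drop (size (rcons p c)) u)) (seg w om 0 (size (rcons p c) + k))].
    apply/seteqP; split => om /=; rewrite segD take_size_cat ?size_seg //;
      by rewrite drop_size_cat ?size_seg.
  exact: (@window_meas _ _ h w _ (fun i c' _ => wmeas i [set c']) (fun u => take (size (rcons p c)) u = rcons p c /\ f (c :: drop (size (rcons p c)) u))).
rewrite measure_semi_additive_ord //.
- rewrite (eq_bigr (fun c => (pi (rcons p c) * Sk k (fun v => f (c :: v)))%:E)); last by move=> c _; exact: IH.
  rewrite sumEFin /= big_distrr /=; congr (_%:E); apply: eq_bigr => c _.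
  by rewrite /pi -cats1 big_cat big_seq1 /= mulrA.
- move=> c c' _ _ [om [[H1 _] [H2 _]]].
  by move: H1 H2; rewrite !size_rcons => -> /rcons_inj [].
- exact: bigsetU_measurable.
Qed.


Variable (Q : {set 'I_n}).
Hypothesis Hnodead : forall (i : 'I_n) (s : 'I_h), 0 < mu s -> Hout E i s != finset.set0.

Lemma pi_seq1 c : pi [:: c] = mu c.
Proof. by rewrite /pi big_seq1. Qed.

Lemma mu_ge0 c : 0 <= mu c.
Proof.
have := cyl_prob [:: c]; rewrite pi_seq1 => H.
have : (0 <= (mu c)%:E)%E by rewrite -H; exact: measure_ge0.
by rewrite lee_fin.
Qed.

Lemma sum_mu : \sum_(c < h) mu c = 1.
Proof.
have := probA 1 [::] (fun _ => true).
rewrite (_ : [set om | _] = setT); last by apply/seteqP; split.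
rewrite probability_setT /pi big_nil mul1r /= => -[] ->.
by apply: eq_bigr => c _; rewrite mulr1.
Qed.

Lemma Sk_ext k (f g : seq 'I_h -> bool) : f =1 g -> Sk k f = Sk k g.
Proof.
elim: k f g => [|k IH] f g H /=; first by rewrite H.
by apply: eq_bigr => c _; rewrite (IH _ (fun v => g (c :: v))).
Qed.

Lemma Sk_true k : Sk k (fun _ => true) = 1.
Proof.
elim: k => [|k IH] //=.
rewrite -sum_mu; apply: eq_bigr => c _; by rewrite IH mulr1.
Qed.

Lemma Sk_mono k (f g : seq 'I_h -> bool) : (forall u, f u -> g u) -> Sk k f <= Sk k g.
Proof.
elim: k f g => [|k IH] f g H /=.
  by case E1: (f [::]) => //=; rewrite (H _ E1).
apply: ler_sum => c _; apply: ler_wpM2l; first exact: mu_ge0.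
by apply: IH => u; apply: H.
Qed.

Lemma Sk_le1 k (f : seq 'I_h -> bool) : Sk k f <= 1.
Proof. by rewrite -(Sk_true k); apply: Sk_mono. Qed.

Lemma realize p : 0 < pi p -> exists om, seg w om 0 (size p) = p.
Proof.
move=> Hp; apply: contrapT => H.
have : [set om | seg w om 0 (size p) = p] = set0.
  by apply/seteqP; split => // om Hom; apply: H; exists om.
move=> H0; have := cyl_prob p; rewrite H0 measure0 => -[] /eqP.
by rewrite eq_sym (gt_eqF Hp).
Qed.

Lemma pi_rcons p c : pi (rcons p c) = pi p * mu c.
Proof. by rewrite /pi -cats1 big_cat big_seq1. Qed.

Lemma seg_take om t k : (t <= k)%N -> take t (seg w om 0 k) = seg w om 0 t.
Proof. by move=> Ht; rewrite /seg -map_take take_iota (minn_idPl Ht). Qed.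

Section Path.
Variables (x0 : 'I_n) (x : nat -> Omega -> option 'I_n).

Lemma dep t om om' : stoch_path E w x0 x -> seg w om 0 t = seg w om' 0 t -> x t om = x t om'.
Proof.
case=> [H0 [_ Hm]]; case: t => [|t] Hs; first by rewrite !H0.
have := sigma_w_inv (Hm t (x t.+1 om)) Hs.
by move=> /(_ erefl) /= ->.
Qed.

Hypothesis Hx : maximal_path E w x0 x.

Definition fp (p : seq 'I_h) k (v : seq 'I_h) : bool :=
  `[< exists om, [/\ seg w om 0 (size p) = p, seg w om (size p) k = v &
      exists t, [/\ (size p < t)%N, (t <= size p + k)%N & exists y, x t om = Some y /\ y \in Q]] >].

Lemma upper k : forall p z, 0 < pi p ->
  (forall om, seg w om 0 (size p) = p -> x (size p) om = Some z) ->
  Sk k (fp p k) <= U E mu Q k z.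
Proof.
case: Hx => Hsp Hmax.
elim: k => [|k IH] p z Hp Hz.
  rewrite /= /fp; case: asboolP => //= [[om [_ _ [t [H1 H2 _]]]]].
  by move: H1 H2; rewrite addn0 => H1 H2; have := leq_ltn_trans H2 H1; rewrite ltnn.
rewrite U_S /=; apply: ler_sum => c _.
have [H0|Hc] := eqVneq (mu c) 0; first by rewrite H0 !mul0r.
have Hmc : 0 < mu c by rewrite lt_def Hc mu_ge0.
apply: ler_wpM2l; first exact: mu_ge0.
have Hpc : 0 < pi (rcons p c) by rewrite pi_rcons mulr_gt0.
have [om1 Hom1] := realize Hpc.
move: (Hom1); rewrite size_rcons segS add0n => /rcons_inj [Hs1 Hw1].
have Hz1 := Hz om1 Hs1.
case Ex: (x (size p).+1 om1) => [z'|]; last first.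
  by move: (Hmax om1 (size p) z Hz1 Ex); rewrite Hw1 => H; move: (Hnodead z Hmc); rewrite H eqxx.
have [z'' [Hz'' Hin]] := (proj1 (proj2 Hsp)) (size p) om1 z' Ex.
move: Hz''; rewrite Hz1 => -[Ez]; rewrite -Ez Hw1 in Hin.
have Hall : forall om, seg w om 0 (size p).+1 = rcons p c -> x (size p).+1 om = Some z'.
  move=> om Hom; rewrite -Ex; apply: dep Hsp _.
  by rewrite Hom -Hom1 size_rcons.
apply: le_trans (le_bigmax_in _ Hin); rewrite /G.
case: ifP => HzQ; first exact: Sk_le1.
apply: le_trans (IH (rcons p c) z' Hpc _); last by rewrite size_rcons.

apply: Sk_mono => v; rewrite /fp => /asboolP [om [Hs Hv [t [H1 H2 [y [Hy HyQ]]]]]].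
apply: asboolT; move: Hv; rewrite segS_l => -[Hwc Hv].
have Hs' : seg w om 0 (size (rcons p c)) = rcons p c by rewrite size_rcons segS add0n Hs Hwc.
exists om; split; [exact: Hs'|by rewrite size_rcons|rewrite size_rcons].
exists t; split => //; last by exists y.
  rewrite ltn_neqAle H1 andbT; apply/eqP => Ht; move: Hy; rewrite -Ht.
  rewrite Hall; last by move: Hs'; rewrite size_rcons.
  by move=> -[Hzy]; move: HzQ; rewrite Hzy HyQ.
by rewrite addSnnS.
Qed.

Lemma upper_reach k : (P (reach_event Q k x) <= (U E mu Q k x0)%:E)%E.
Proof.
have Hsp := proj1 Hx.
have -> : reach_event Q k x = [set om | seg w om 0 (size (@nil 'I_h)) = [::] /\ fp [::] k (seg w om (size (@nil 'I_h)) k)].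
  apply/seteqP; split => om /=.
    move=> [t [H1 H2 Hy]]; split => //; apply/asboolP; exists om; split => //.
    by exists t.
  move=> [_ /asboolP [om' [_ Hs [t [H1 H2 [y [Hy HyQ]]]]]]].
  exists t; split => //; exists y; split => //; rewrite -Hy; apply: dep => //.
  by rewrite -!(seg_take _ H2) Hs.
rewrite probA /pi big_nil mul1r lee_fin; apply: upper; first by rewrite /pi big_nil ltr01.
by move=> om _; case: Hsp.
Qed.

End Path.



Definition ch m z c : 'I_n :=
  odflt z [pick z' in Hout E z c | G E mu Q m z' == M E mu Q m z c].

Lemma ch_spec m z c : Hout E z c != finset.set0 ->
  ch m z c \in Hout E z c /\ G E mu Q m (ch m z c) = M E mu Q m z c.
Proof.
move=> /set0Pn [z0 Hz0]; rewrite /ch; case: pickP => [z' /andP [Hz /eqP HG]|H] //=.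
have [z1 Hz HG] := @bigmax_att _ _ (fun z1 => z1 \in Hout E z c) (fun z1 => G E mu Q m z1) z0 Hz0 (fun z1 _ => G_ge0 E Q mu_ge0 m z1).
by move: (H z1); rewrite Hz /= /M -HG eqxx.
Qed.

Fixpoint st (m : nat) (z : 'I_n) (u : seq 'I_h) : option 'I_n :=
  match u with
  | [::] => Some z
  | c :: v => if Hout E z c == finset.set0 then None else st m.-1 (ch m.-1 z c) v
  end.

Fixpoint hitg (m : nat) (z : 'I_n) (u : seq 'I_h) : bool :=
  match m, u with
  | m'.+1, c :: v => if Hout E z c == finset.set0 then false
                     else (ch m' z c \in Q) || hitg m' (ch m' z c) v
  | _, _ => false
  end.

Lemma Sk_hitg m z : Sk m (hitg m z) = U E mu Q m z.
Proof.
elim: m z => [|m IH] z //.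
rewrite U_S [LHS]/=; apply: eq_bigr => c _.
have [H0|Hne] := eqVneq (Hout E z c) finset.set0; first by rewrite (mu0 mu_ge0 Hnodead H0) !mul0r.
congr (_ * _); have [_ HG] := ch_spec m Hne; rewrite -HG /G.
case: ifP => HQ.
  by rewrite -(Sk_true m); apply: Sk_ext => v /=.
by rewrite -IH; apply: Sk_ext => v /=.
Qed.

Lemma st_rcons m z u c : st m z (rcons u c) =
  if st m z u is Some z'' then
    (if Hout E z'' c == finset.set0 then None else Some (ch (m - size u)%N.-1 z'' c))
  else None.
Proof.
elim: u m z => [|a u IH] m z /=; first by rewrite subn0.
case: ifP => _ //; rewrite IH.
by have -> : (m.-1 - size u)%N = (m - (size u).+1)%N by rewrite -!subn1 -subnDA add1n.
Qed.

Lemma hitg_st m z u : size u = m -> (hitg m z u <->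
  exists t, [/\ (1 <= t)%N, (t <= m)%N & exists y, st m z (take t u) = Some y /\ y \in Q]).
Proof.
elim: m z u => [|m IH] z u Hu.
  split => //= -[t [H1 H2 _]]; by move: (leq_trans H1 H2).
case: u Hu => [|c v] //= [Hv].
have [H0|Hne] := eqVneq (Hout E z c) finset.set0.
  split => // -[[|t] [H1 H2 [y []]]] //=.
  by rewrite H0 eqxx.
rewrite ?(negbTE Hne) /=; split.
  case/orP => [HQ|/(IH _ _ Hv) [t [H1 H2 [y [Hy HyQ]]]]].
    by exists 1%N; split => //; exists (ch m z c); split => //; rewrite /= take0 /= ?(negbTE Hne).
  exists t.+1; split => //; exists y; split => //.
  by rewrite /= ?(negbTE Hne) /= -Hy.
move=> [[|t] [H1 H2 [y [Hy HyQ]]]] //.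
move: Hy; rewrite /= ?(negbTE Hne) /=.
case: t H1 H2 => [|t] _ H2.
  by rewrite take0 /= => -[->]; rewrite HyQ.
move=> Hy; apply/orP; right; apply/(IH _ _ Hv).
by exists t.+1; split => //; exists y.
Qed.

Section Greedy.
Variables (k : nat) (x0 : 'I_n).

Definition xg (t : nat) (om : Omega) : option 'I_n := st k x0 (seg w om 0 t).

Lemma xg_max : maximal_path E w x0 xg.
Proof.
split; first split; [by []|split|].
- move=> t om y; rewrite /xg segS add0n st_rcons.
  case: (st k x0 (seg w om 0 t)) => [z|] //.
  case: ifP => // Hne [<-]; exists z; split => //.
  by have [] := ch_spec (k - size (seg w om 0 t))%N.-1 (negbT Hne).
- move=> t o; have HH := @window_sigma t (fun u => st k x0 u = o); exact HH.
- move=> om t y; rewrite /xg segS add0n st_rcons => ->.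
  by case: ifP => [/eqP ->|].
Qed.

Lemma xg_reach : P (reach_event Q k xg) = (U E mu Q k x0)%:E.
Proof.
have -> : reach_event Q k xg = [set om | seg w om 0 (size (@nil 'I_h)) = [::] /\
     hitg k x0 (seg w om (size (@nil 'I_h)) k)].
  apply/seteqP; split => om /=.
    move=> [t [H1 H2 [y [Hy HyQ]]]]; split => //; apply/(hitg_st _ (size_seg _ _ _ _)).
    by exists t; split => //; exists y; rewrite seg_take.
  move=> [_ /(hitg_st _ (size_seg _ _ _ _)) [t [H1 H2 [y [Hy HyQ]]]]].
  by exists t; split => //; exists y; rewrite /xg -(seg_take _ H2).
by rewrite probA /pi big_nil mul1r Sk_hitg.
Qed.

End Greedy.

End Main.

Theorem proposition1 (R : realType) (d : measure_display) (Omega : measurableType d)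
  (P : probability Omega R) (n h : nat) (E : 'I_h -> {set 'I_n * 'I_n})
  (mu : 'I_h -> R) (w : nat -> Omega -> 'I_h)
  (Hiid : iid_law P w mu)
  (Hnodead : forall (i : 'I_n) (s : 'I_h), 0 < mu s -> Hout E i s != finset.set0)
  (Q : {set 'I_n}) :
  forall (k : nat) (x : 'I_n),
    weak_reach P E w Q k x = (vstar E Q mu k (emb x))%:E.
Proof.
move=> k x.
rewrite (vstar_emb Q (mu_ge0 Hiid) Hnodead).
apply/eqP; rewrite eq_le; apply/andP; split.
  apply: ge_ereal_sup => _ [x' Hx' <-].
  exact: (upper_reach Hiid Q Hnodead Hx' k).
apply: ereal_sup_ubound; exists (xg E mu w Q k x).
  exact: (xg_max E Hiid Q k x).
exact: (xg_reach Hiid Q Hnodead k x).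
Qed.
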